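(* Let $N\ge2$, $d\ge1$, and let $x(t)=(x_1(t),\dots,x_N(t))$ be a (Carathéodory) solution of $$\dot x_i(t)=\frac{\lambda_i(x)}{N}\sum_{j=1}^N M_{ij}(t)\,\phi_{ij}(x_i,x_j)\,(x_j(t)-x_i(t)),\qquad i=1,\dots,N,$$ where $x_i\in\mathbb{R}^d$, all $M_{ij}:[0,+\infty)\to[0,1]$ are Lebesgue measurable, and $\lambda_i:\mathbb{R}^{Nd}\to\mathbb{R}^+$, $\phi_{ij}:\mathbb{R}^d\times\mathbb{R}^d\to\mathbb{R}^+$ are Lipschitz continuous and strictly positive. Define $\mathrm{supp}(x(t))$ as the closed convex hull of $\{x_1(t),\dots,x_N(t)\}$. Then for $0\le t\le s$ it holds $\mathrm{supp}(x(t))\supseteq\mathrm{supp}(x(s))$. In particular, when $d=1$, the function $t\mapsto\max_j x_j(t)$ is non-increasing and $t\mapsto\min_j x_j(t)$ is non-decreasing; and in any dimension the diameter $t\mapsto\max_{i,j}|x_i(t)-x_j(t)|$ is non-increasing.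
   Context: $|\cdot|$ is the Euclidean norm. *)

(* Defs.v *)
From HB Require Import structures.
From mathcomp Require Import all_boot all_order all_algebra.
From mathcomp Require Import all_classical all_reals all_analysis.
Set Implicit Arguments. Unset Strict Implicit. Unset Printing Implicit Defensive.
Import Order.TTheory GRing.Theory Num.Theory.
Import numFieldNormedType.Exports.
Local Open Scope classical_set_scope.
Local Open Scope ring_scope.

Definition convex_rV (R : realType) (d : nat) (A : set 'rV[R]_d) : Prop :=
  forall a b, A a -> A b -> forall l : R, 0 <= l -> l <= 1 ->
    A (l *: a + (1 - l) *: b).

Definition closed_convex_hull (R : realType) (d : nat) (P : set 'rV[R]_d)
  : set 'rV[R]_d :=
  \bigcap_(C in [set C : set 'rV[R]_d | closed C /\ convex_rV C /\ P `<=` C]) C.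

(* supp(x) for a configuration x (row i of the N x d matrix = agent x_i). *)
Definition supp (R : realType) (N d : nat) (X : 'M[R]_(N, d)) : set 'rV[R]_d :=
  closed_convex_hull [set row i X | i in [set: 'I_N]].

Definition eucl_norm (R : realType) (d : nat) (v : 'rV[R]_d) : R :=
  Num.sqrt (\sum_(k < d) v ord0 k ^+ 2).

(* Maximum / minimum of finitely many reals (meaningful for N >= 1). *)
Definition fmax (R : realType) (N : nat) (v : 'I_N -> R) : R :=
  \big[Num.max/head 0 [seq v j | j <- enum 'I_N]]_(j < N) v j.
Definition fmin (R : realType) (N : nat) (v : 'I_N -> R) : R :=
  \big[Num.min/head 0 [seq v j | j <- enum 'I_N]]_(j < N) v j.

Definition diam (R : realType) (N d : nat) (X : 'M[R]_(N, d)) : R :=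
  \big[Num.max/0]_(i < N) \big[Num.max/0]_(j < N) eucl_norm (row j X - row i X).

Definition rhs (R : realType) (N d : nat)
  (lam : 'I_N -> 'M[R]_(N, d) -> R)
  (phi : 'I_N -> 'I_N -> 'rV[R]_d * 'rV[R]_d -> R)
  (M : 'I_N -> 'I_N -> R -> R) (X : 'M[R]_(N, d)) (t : R)
  (i : 'I_N) (k : 'I_d) : R :=
  lam i X / N%:R *
    \sum_(j < N) M i j t * phi i j (row i X, row j X) * (X j k - X i k).

(* R equipped with the Lebesgue (= completed Borel) sigma-algebra, on which
   completed_lebesgue_measure lives; this is convertible to R. *)
Definition Leb (R : realType) : measurableType _ :=
  caratheodory_type ((@wlength R idfun)^*)%mu.

Definition caratheodory_solution (R : realType) (N d : nat)
  (lam : 'I_N -> 'M[R]_(N, d) -> R)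
  (phi : 'I_N -> 'I_N -> 'rV[R]_d * 'rV[R]_d -> R)
  (M : 'I_N -> 'I_N -> R -> R) (x : R -> 'M[R]_(N, d)) : Prop :=
  forall (t : R), 0 <= t -> forall (i : 'I_N) (k : 'I_d),
    (@completed_lebesgue_measure R).-integrable
        (`[0%R, t]%classic : set (Leb R))
        (fun s : Leb R => (rhs lam phi M (x s) s i k)%:E) /\
    ((x t i k)%:E = (x 0 i k)%:E +
       \int[@completed_lebesgue_measure R]_(s in (`[0%R, t]%classic : set (Leb R)))
         (rhs lam phi M (x s) s i k)%:E)%E.

(* Main.v *)
Require Import Defs.
From HB Require Import structures.
From mathcomp Require Import all_boot all_order all_algebra.
From mathcomp Require Import all_classical all_reals all_analysis.
From mathcomp Require Import ring lra.
Import Order.TTheory GRing.Theory Num.Theory.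
Import numFieldNormedType.Exports.
Local Open Scope classical_set_scope.
Local Open Scope ring_scope.
Set Implicit Arguments. Unset Strict Implicit. Unset Printing Implicit Defensive.
Section S.
Variable R : realType.
Notation mu := (@completed_lebesgue_measure R).
Local Open Scope ereal_scope.

Lemma mitv (i : interval R) : measurable ([set` i] : set (Leb R)).
Proof. apply: sub_caratheodory; exact: measurable_itv. Qed.

Definition IS (F h : R -> R) : Prop := forall t : R, (0 <= t)%R ->
  mu.-integrable (`[0%R, t]%classic : set (Leb R)) (fun s : Leb R => (h s)%:E) /\
  (F t)%:E = (F 0%R)%:E + \int[mu]_(s in (`[0%R, t]%classic : set (Leb R))) (h s)%:E.

Lemma IS_add F1 h1 F2 h2 : IS F1 h1 -> IS F2 h2 ->
  IS (fun t => F1 t + F2 t)%R (fun s => h1 s + h2 s)%R.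
Proof.
move=> H1 H2 t t0; have [i1 e1] := H1 t t0; have [i2 e2] := H2 t t0.
split.
  apply: (eq_integrable (mitv _) _ _ _ (integrableD (mitv _) i1 i2)) => s _ /=; by rewrite EFinD.
have := integralD_EFin (mitv _) i1 i2.
rewrite (_ : (fun x : Leb R => _) = (fun s => ((h1 s + h2 s)%R)%:E)) //.
move=> ->; rewrite EFinD e1 e2.
rewrite addeACA //.
Qed.

Lemma IS_scale F h (a : R) : IS F h -> IS (fun t => a * F t)%R (fun s => a * h s)%R.
Proof.
move=> H t t0; have [i e] := H t t0; split.
  apply: (eq_integrable (mitv _) _ _ _ (integrableZl (mitv _) a i)) => s _ /=; by rewrite EFinM.
have -> : \int[mu]_(s in (`[0%R, t]%classic : set (Leb R))) ((a * h s)%R)%:E =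
  \int[mu]_(s in (`[0%R, t]%classic : set (Leb R))) (a%:E * (h s)%:E).
  by apply: eq_integral => s _; rewrite EFinM.
rewrite (integralZl (mitv _) i).
rewrite !EFinM e muleDr //.
Qed.

Lemma muoc (a b : R) : (a <= b)%R -> mu (`]a, b]%classic : set (Leb R)) = (b - a)%:E.
Proof.
move=> ab. have := @lebesgue_measure_itv R `]a, b]. rewrite /=.
change (lebesgue_measure (`]a, b]%classic : set R)) with (mu (`]a, b]%classic : set (Leb R))).
move=> ->. rewrite lte_fin. case: ltP => // ba.
have -> : b = a by apply/eqP; rewrite eq_le ab ba.
by rewrite subrr.
Qed.

Lemma int_cst_oc (a b c : R) : (a <= b)%R ->
  mu.-integrable (`]a, b]%classic : set (Leb R)) (fun _ => c%:E).
Proof.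
move=> ab; apply/integrableP; split; first exact: measurable_cst.
have := integral_cst mu (mitv `]a, b]) `|c%:E|.
rewrite /cst => ->.
change (`|c%:E| * completed_lebesgue_measure (`]a, b]%classic : set (Leb R)) < +oo).
by rewrite muoc // -EFinM ltry.
Qed.

Lemma IS0 : IS (fun _ => 0%R) (fun _ => 0%R).
Proof.
move=> t t0; split.
  exact: (integrable0 mu _).
by rewrite (integral0 mu) adde0.
Qed.

Lemma IS_ext F h F' h' : (forall t, F t = F' t) -> (forall s, h s = h' s) -> IS F h -> IS F' h'.
Proof.
move=> eF eh; have -> : F' = F by apply/funext => t; rewrite eF.
by have -> : h' = h by apply/funext => t; rewrite eh.
Qed.

Lemma IS_sum (I : eqType) (s : seq I) (F h : I -> R -> R) :
  (forall k, IS (F k) (h k)) ->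
  IS (fun t => \sum_(k <- s) F k t)%R (fun u => \sum_(k <- s) h k u)%R.
Proof.
move=> H; elim: s => [|a s IH].
  by apply: (IS_ext _ _ IS0) => t; rewrite big_nil.
by apply: (IS_ext _ _ (IS_add (H a) IH)) => t; rewrite big_cons.
Qed.

Lemma IS_incr F h r s : IS F h -> (0 <= r)%R -> (r <= s)%R ->
  mu.-integrable (`]r, s]%classic : set (Leb R)) (fun u : Leb R => (h u)%:E) /\
  ((F s - F r)%R)%:E = \int[mu]_(u in (`]r, s]%classic : set (Leb R))) (h u)%:E.
Proof.
move=> H r0 rs.
have s0 : (0 <= s)%R by apply: le_trans rs.
have [iS es] := H s s0; have [iR er] := H r r0.
have Ue : (`[0%R, s]%classic : set (Leb R)) = `[0%R, r] `|` `]r, s].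
  apply/seteqP; split => u /=; rewrite !in_itv /=.
    move=> /andP[u0 us]; case: (leP u r) => ur; [left|right]; apply/andP; split; lra.
  by case=> /andP[a1 a2]; apply/andP; split; lra.
have iocs : mu.-integrable (`]r, s]%classic : set (Leb R)) (fun u : Leb R => (h u)%:E).
  apply: integrableS iS => //; try exact: mitv.
  rewrite Ue; exact: subsetUr.
split => //.
set I2 := \int[mu]_(u in (`]r, s]%classic : set (Leb R))) (h u)%:E.
have E1 : (F s)%:E = (F r)%:E + I2.
  rewrite es Ue integral_setU; first last.
  - apply/disj_setPS => u /= []; rewrite !in_itv /= => /andP[_ ur] /andP[ru _].
    by move: (lt_le_trans ru ur); rewrite ltxx.
  - by rewrite -Ue; exact: (measurable_int _ iS).
  - exact: mitv.
  - exact: mitv.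
  by rewrite addeA -er.
have f2 : I2 \is a fin_num := integrable_fin_num (mitv _) iocs.
rewrite -(fineK f2) in E1 *.
rewrite -EFinD in E1; have E2 := EFin_inj E1.
by rewrite E2; congr EFin; ring.
Qed.

Lemma IS_le F h r s c : IS F h -> (0 <= r)%R -> (r <= s)%R ->
  (forall u : R, (r < u)%R -> (u <= s)%R -> (h u <= c)%R) -> (F s - F r <= c * (s - r))%R.
Proof.
move=> H r0 rs hc.
have [i e] := IS_incr H r0 rs.
rewrite -lee_fin e.
apply: le_trans (le_integral (mitv _) i (int_cst_oc c rs) _) _.
  move=> u; rewrite inE /= in_itv /= => /andP[ru us].
  by rewrite lee_fin hc.
have := integral_cst mu (mitv `]r, s]) c%:E; rewrite /cst => ->.
change (c%:E * completed_lebesgue_measure (`]r, s]%classic : set (Leb R)) <= (c * (s - r))%:E).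
by rewrite muoc // -EFinM.
Qed.

Lemma IS_bound F h T : IS F h -> (0 <= T)%R ->
  exists B : R, forall s, (0 <= s)%R -> (s <= T)%R -> (`|F s| <= B)%R.
Proof.
move=> H T0.
have [iT _] := H T T0.
set J := \int[mu]_(u in (`[0%R, T]%classic : set (Leb R))) `|(h u)%:E|.
have fJ : J \is a fin_num.
  exact: (integrable_fin_num (mitv _) (integrable_abse iT)).
exists (`|F 0| + fine J)%R => s s0 sT.
have [iS es] := H s s0.
have Hs : `|(F s)%:E| <= `|(F 0%R)%:E| + J.
  rewrite es; apply: le_trans (lee_abs_add _ _) _.
  rewrite leeD2l //.
  apply: le_trans (le_abse_integral mu (mitv _) (measurable_int _ iS)) _.
  apply: ge0_subset_integral.
  - exact: mitv.
  - exact: mitv.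
  - exact: (measurable_int _ (integrable_abse iT)).
  - by move=> u _.
  - by move=> u /=; rewrite !in_itv /= => /andP[u0 us]; rewrite u0 (le_trans us sT).
by rewrite -lee_fin EFinD fineK.
Qed.
End S.
Section Aux.
Variable R : realType.

Lemma lip_bound (V : normedModType R) (f : V -> R) :
  lipschitz f -> exists k : R, forall X Y, `|f X - f Y| <= k * `|X - Y|.
Proof. by move=> /pinfty_ex_gt0 [k _ Hk]; exists k => X Y; exact: (Hk (X, Y)). Qed.

Lemma mx_norm_le (m n : nat) (X : 'M[R]_(m, n)) (B : R) : 0 <= B ->
  (forall i j, `|X i j| <= B) -> `|X| <= B.
Proof.
move=> B0 H; rewrite [`|X|]mx_normrE.
elim/big_ind: _ => //.
by move=> a b aB bB; rewrite ge_max aB bB.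

Qed.

Lemma pair_norm_le (m n : nat) (a : 'rV[R]_m) (b : 'rV[R]_n) (B : R) :
  `|a| <= B -> `|b| <= B -> `|(a, b)| <= B.
Proof. by move=> aB bB; rewrite prod_normE /= ge_max aB bB. Qed.

Lemma lip_val (V : normedModType R) (f : V -> R) : lipschitz f ->
  exists c k : R, 0 <= k /\ forall X, `|f X| <= c + k * `|X|.
Proof.
move=> /lip_bound [k Hk]; exists `|f 0|, `|k|; split => // X.
have := Hk X 0; rewrite subr0 => H.
have : `|f X| <= `|f 0| + `|f X - f 0|.
  by rewrite -[X in `|X| <= _](subrK (f 0) (f X)) addrC; apply: ler_normD.
move=> H2; apply: le_trans H2 _; rewrite lerD2l; apply: le_trans H _.
by rewrite ler_wpM2r // real_ler_norm // num_real.
Qed.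

Lemma max_seq_bound (I : eqType) (s : seq I) (P : I -> R -> Prop) :
  (forall i B B', B <= B' -> P i B -> P i B') ->
  (forall i, i \in s -> exists B, P i B) -> exists B, forall i, i \in s -> P i B.
Proof.
move=> Pm; elim: s => [_|a s IH H]; first by exists 0.
have [Ba Pa] := H a (mem_head _ _).
have [Bs Ps] : exists B, forall i, i \in s -> P i B.
  by apply: IH => i is_; apply: H; rewrite in_cons is_ orbT.
exists (Num.max Ba Bs) => i; rewrite in_cons => /orP[/eqP->|is_].
  by apply: Pm Pa; rewrite le_max lexx.
by apply: Pm (Ps i is_); rewrite le_max lexx orbT.
Qed.

Lemma fin_bound (I : finType) (P : I -> R -> Prop) :
  (forall i B B', B <= B' -> P i B -> P i B') ->
  (forall i, exists B, P i B) -> exists B, forall i, P i B.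
Proof.
move=> Pm H; have [B HB] := @max_seq_bound I (enum I) P Pm (fun i _ => H i).
by exists B => i; apply: HB; rewrite mem_enum.
Qed.

End Aux.
Section Sep.
Variables (R : realType) (d : nat).

Definition dotv (w : 'I_d -> R) (z : 'rV[R]_d) : R := \sum_(k < d) w k * z ord0 k.
Definition qd (y z : 'rV[R]_d) : R := \sum_(k < d) (y ord0 k - z ord0 k) ^+ 2.

Lemma qd_ge0 y z : 0 <= qd y z.
Proof. by apply: sumr_ge0 => k _; exact: sqr_ge0. Qed.

Lemma closed_gap (C : set 'rV[R]_d) y : closed C -> ~ C y ->
  exists e : R, 0 < e /\ forall z, C z -> e <= qd y z.
Proof.
move=> cC nCy.
have : nbhs y (~` C) by exact: (closed_openC cC).
move=> /nbhs_ballP [e e0 He].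
exists (e ^+ 2); split; first by rewrite exprn_gt0.
move=> z Cz.
have nb : ~ ball y e z by move=> /He.
have ge : e <= `|y - z|.
  rewrite leNgt; apply/negP => lt; apply: nb.
  by rewrite mx_norm_ball /ball_.
have nz : `|y - z| != 0 by rewrite gt_eqF // (lt_le_trans e0 ge).
have [[a b] /= Hab] := mx_norm_neq0 nz.
have ge2 : e <= `|(y - z) a b| by rewrite -Hab; exact: ge.
move: ge2; clear ge; move=> ge.
rewrite !mxE (ord1 a) in ge.
rewrite /qd (bigD1 b) //= -[X in X <= _]addr0.
apply: lerD; last by apply: sumr_ge0 => k _; exact: sqr_ge0.
have h := ler_pM (ltW e0) (ltW e0) ge ge.
rewrite !expr2; apply: le_trans h _.
rewrite -normrM ger0_norm //.
by have := sqr_ge0 (y 0 b - z 0 b); rewrite expr2.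
Qed.


Lemma sum_expand (v u : 'I_d -> R) t :
  \sum_(k < d) (v k - t * u k) ^+ 2 =
  \sum_(k < d) v k ^+ 2 - 2 * t * \sum_(k < d) v k * u k + t ^+ 2 * \sum_(k < d) u k ^+ 2.
Proof.
rewrite !mulr_sumr -sumrB -big_split /=; apply: eq_bigr => k _; ring.
Qed.

Lemma separate (C : set 'rV[R]_d) (N : nat) (P : 'I_N -> 'rV[R]_d) (j0 : 'I_N) y :
  closed C -> convex_rV C -> (forall j, C (P j)) -> ~ C y ->
  exists w, forall j, dotv w (P j) < dotv w y.
Proof.
move=> cC vC CP nCy.
have [D0 [D00 HD0]] := closed_gap cC nCy.
pose E := [set qd y z | z in C].
have hlb : has_lbound E by exists 0 => _ [z _ <-]; exact: qd_ge0.
have hne : E !=set0 by exists (qd y (P j0)); exists (P j0).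
have hE : has_inf E by [].
have D0D : D0 <= inf E by apply: lb_le_inf => // _ [z Cz <-]; exact: HD0.
have Dlb : forall z, C z -> inf E <= qd y z.
  by move=> z Cz; apply: ge_inf => //; exists z.
pose Qs := \sum_(j < N) qd y (P j).
have qPj : forall j, qd y (P j) <= Qs.
  move=> j; rewrite /Qs (bigD1 j) //= lerDl.
  by apply: sumr_ge0 => i _; exact: qd_ge0.
have DQ : inf E <= Qs by apply: le_trans (Dlb _ (CP j0)) (qPj j0).
pose Q0 := 6 * Qs.
pose t := D0 / (2 * (Q0 + D0 + 1)).
have Qs0 : 0 <= Qs by lra.
have den0 : 0 < 2 * (Q0 + D0 + 1) by rewrite /Q0; lra.
have t0 : 0 < t by rewrite divr_gt0.
have tden : t * (2 * (Q0 + D0 + 1)) = D0 by rewrite /t divfK // gt_eqF.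
have Q00 : 0 <= Q0 by rewrite /Q0; lra.
have tD0 : 0 < t * D0 by rewrite mulr_gt0.
have tQ0 : 0 <= t * Q0 by rewrite mulr_ge0 // ltW.
have t1 : t <= 1 by rewrite /t ler_pdivrMr // mul1r; lra.
have tQ : t * Q0 <= D0 / 2 by lra.
pose eta := t * D0 / 2.
have eta0 : 0 < eta by rewrite /eta; lra.
have [_ [z Cz <-] hz] := inf_adherent eta0 hE.
pose v := fun k : 'I_d => y ord0 k - z ord0 k.
exists v => j.
pose u := fun k : 'I_d => P j ord0 k - z ord0 k.
pose Svv := \sum_(k < d) v k ^+ 2.
pose Svu := \sum_(k < d) v k * u k.
pose Suu := \sum_(k < d) u k ^+ 2.
have ea : dotv v y - dotv v (P j) = Svv - Svu.
  rewrite /dotv /Svv /Svu -!sumrB; apply: eq_bigr => k _; rewrite /v /u; ring.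
have ee : qd y z = Svv by [].
have Czt : C (t *: P j + (1 - t) *: z) by apply: vC => //; lra.
have ec : qd y (t *: P j + (1 - t) *: z) = Svv - 2 * t * Svu + t ^+ 2 * Suu.
  rewrite -sum_expand /qd; apply: eq_bigr => k _; rewrite !mxE /v /u; congr (_ ^+ 2); ring.
have hd := Dlb _ Czt; rewrite ec in hd.
have hSuu : Suu <= 2 * qd y (P j) + 2 * Svv.
  rewrite /Suu /qd /Svv !mulr_sumr -big_split /=; apply: ler_sum => k _.
  rewrite /u /v; have := sqr_ge0 ((y ord0 k - P j ord0 k) + (y ord0 k - z ord0 k)); nra.
have hSuu2 : Suu <= Q0.
  have := qPj j; rewrite /Q0 /eta in hz *; nra.
have h1 : t ^+ 2 * Suu <= t ^+ 2 * Q0 by apply: ler_wpM2l => //; exact: sqr_ge0.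
have h3 : 2 * Svu < D0.
  have : t * (2 * Svu) < t * D0.
    have h2 : t * (t * Q0) <= t * (D0 / 2) by apply: ler_wpM2l => //; exact: ltW.
    rewrite /eta in hz; rewrite ee in hz; rewrite expr2 in h1 hd; lra.
  by rewrite ltr_pM2l.
have := Dlb z Cz; rewrite -subr_gt0 ea -ee; lra.
Qed.

End Sep.
Section BigMax.
Variable R : realType.

Lemma bigmax_ge_seq (I : eqType) (s : seq I) (F : I -> R) x0 j :
  j \in s -> F j <= \big[Num.max/x0]_(i <- s) F i.
Proof.
elim: s => // a s IH; rewrite in_cons big_cons => /orP[/eqP->|js].
  by rewrite le_max lexx.
by rewrite le_max IH ?orbT.
Qed.

Lemma bigmax_ge (I : finType) (F : I -> R) x0 (j : I) :
  F j <= \big[Num.max/x0]_i F i.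
Proof. by apply: bigmax_ge_seq; rewrite mem_index_enum. Qed.

Lemma bigmax_leB (I : finType) (F : I -> R) x0 B :
  x0 <= B -> (forall i, F i <= B) -> \big[Num.max/x0]_i F i <= B.
Proof.
move=> x0B H; elim/big_ind: _ => //.
by move=> a b aB bB; rewrite ge_max aB bB.
Qed.

Lemma bigmax_ex (I : finType) (F : I -> R) (j0 : I) :
  exists j, \big[Num.max/F j0]_i F i = F j.
Proof.
elim/big_ind: _; first by exists j0.
  move=> a b [ja ->] [jb ->]; rewrite maxEle; case: ifP => _.
    by exists jb.
  by exists ja.
by move=> i _; exists i.
Qed.

Lemma bigmin_le_seq (I : eqType) (s : seq I) (F : I -> R) x0 j :
  j \in s -> \big[Num.min/x0]_(i <- s) F i <= F j.
Proof.
elim: s => // a s IH; rewrite in_cons big_cons => /orP[/eqP->|js].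
  by rewrite ge_min lexx.
by rewrite ge_min IH ?orbT.
Qed.

Lemma bigmin_le (I : finType) (F : I -> R) x0 (j : I) :
  \big[Num.min/x0]_i F i <= F j.
Proof. by apply: bigmin_le_seq; rewrite mem_index_enum. Qed.

Lemma bigmin_geB (I : finType) (F : I -> R) x0 B :
  B <= x0 -> (forall i, B <= F i) -> B <= \big[Num.min/x0]_i F i.
Proof.
move=> x0B H; elim/big_ind: _ => //.
by move=> a b aB bB; rewrite le_min aB bB.
Qed.

Lemma head_ex (I : finType) (f : I -> R) (j0 : I) :
  exists j1, head 0 [seq f j | j <- enum I] = f j1.
Proof.
have : j0 \in enum I by rewrite mem_enum.
by case: (enum I) => [|a s] //= _; exists a.
Qed.

End BigMax.
Section ODE.
Variables (R : realType) (N d : nat).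
Variables (lam : 'I_N -> 'M[R]_(N, d) -> R)
  (phi : 'I_N -> 'I_N -> 'rV[R]_d * 'rV[R]_d -> R)
  (M : 'I_N -> 'I_N -> R -> R) (x : R -> 'M[R]_(N, d)).
Hypothesis hM_range : forall i j t, 0 <= t -> 0 <= M i j t <= 1.
Hypothesis hlam_lip : forall i, lipschitz (lam i).
Hypothesis hlam_pos : forall i X, 0 < lam i X.
Hypothesis hphi_lip : forall i j, lipschitz (phi i j).
Hypothesis hphi_pos : forall i j y z, 0 < phi i j (y, z).
Hypothesis hx : caratheodory_solution lam phi M x.

Definition fv (v : 'I_d -> R) (i : 'I_N) (t : R) : R := \sum_(k < d) v k * x t i k.
Definition aa (i j : 'I_N) (s : R) : R :=
  lam i (x s) / N%:R * (M i j s * phi i j (row i (x s), row j (x s))).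
Definition gv (v : 'I_d -> R) (i : 'I_N) (s : R) : R :=
  \sum_(j < N) aa i j s * (fv v j s - fv v i s).

Lemma IScoord i k : IS (fun t => x t i k) (fun s => rhs lam phi M (x s) s i k).
Proof. move=> t t0; have [A B] := hx t0 i k; split; [exact: A | exact: B]. Qed.

Lemma ISf v i : IS (fv v i) (gv v i).
Proof.
have H := IS_sum (index_enum 'I_d) (fun k => IS_scale (v k) (IScoord i k)).
apply: (IS_ext _ _ H) => // s.
rewrite /gv /rhs /fv /aa.
under eq_bigr do rewrite mulr_sumr.
under eq_bigr do rewrite mulr_sumr.
rewrite exchange_big /=; apply: eq_bigr => j _.
rewrite -sumrB mulr_sumr; apply: eq_bigr => k _.
ring.
Qed.

Lemma aa_ge0 i j s : 0 <= s -> 0 <= aa i j s.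
Proof.
move=> s0; rewrite /aa; have /andP[M0 _] := hM_range i j s0.
apply: mulr_ge0; last by apply: mulr_ge0 => //; exact: ltW.
by apply: divr_ge0; [exact: ltW | exact: ler0n].
Qed.


Lemma x_bound T : 0 <= T -> exists B : R, 0 <= B /\
  forall s, 0 <= s -> s <= T -> forall i k, `|x s i k| <= B.
Proof.
move=> T0.
have [B HB] := @fin_bound R (('I_N * 'I_d)%type : finType)
  (fun p B => forall s, 0 <= s -> s <= T -> `|x s p.1 p.2| <= B)
  (fun p B B' BB' H s s0 sT => le_trans (H s s0 sT) BB')
  (fun p => IS_bound (IScoord p.1 p.2) T0).
exists `|B|; split => // s s0 sT i k.
by apply: le_trans (HB (i, k) s s0 sT) _; exact: ler_norm.
Qed.

Lemma a_bound T : 0 <= T -> exists A : R, 0 <= A /\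
  forall s, 0 <= s -> s <= T -> forall i j, aa i j s <= A.
Proof.
move=> T0; have [B [B0 HB]] := x_bound T0.
have Hex : forall p : ('I_N * 'I_N)%type, exists A : R,
    forall s, 0 <= s -> s <= T -> aa p.1 p.2 s <= A.
  move=> [i j] /=.
  have [c [k [k0 Hl]]] := lip_val (hlam_lip i).
  have [c' [k' [k0' Hp]]] := lip_val (hphi_lip i j).
  exists ((c + k * B) / N%:R * (c' + k' * B)) => s s0 sT.
  have /andP[M0 M1] := hM_range i j s0.
  have hx1 : `|x s| <= B by apply: mx_norm_le => // a b; exact: HB.
  have hrow l : `|row l (x s)| <= B.
    by apply: mx_norm_le => // a b; rewrite mxE; exact: HB.
  rewrite /aa; apply: ler_pM.
  - by apply: divr_ge0; [exact: ltW | exact: ler0n].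
  - by apply: mulr_ge0 => //; exact: ltW.
  - apply: ler_wpM2r; first by rewrite invr_ge0 ler0n.
    apply: le_trans (ler_norm _) _; apply: le_trans (Hl _) _.
    by rewrite lerD2l ler_wpM2l.
  - apply: le_trans (_ : phi i j (row i (x s), row j (x s)) <= _).
      by rewrite ler_piMl // ltW.
    apply: le_trans (ler_norm _) _; apply: le_trans (Hp _) _.
    rewrite lerD2l ler_wpM2l //; exact: pair_norm_le.
have [A HA] := @fin_bound R (('I_N * 'I_N)%type : finType)
  (fun p A => forall s, 0 <= s -> s <= T -> aa p.1 p.2 s <= A)
  (fun p B B' BB' H s s0 sT => le_trans (H s s0 sT) BB') Hex.
exists `|A|; split => // s s0 sT i j.
by apply: le_trans (HA (i, j) s s0 sT) _; exact: ler_norm.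
Qed.

Lemma f_bound v T : 0 <= T -> exists B : R, 0 <= B /\
  forall s, 0 <= s -> s <= T -> forall j, `|fv v j s| <= B.
Proof.
move=> T0.
have [B HB] := @fin_bound R 'I_N
  (fun j B => forall s, 0 <= s -> s <= T -> `|fv v j s| <= B)
  (fun p B B' BB' H s s0 sT => le_trans (H s s0 sT) BB')
  (fun j => IS_bound (ISf v j) T0).
exists `|B|; split => // s s0 sT j.
by apply: le_trans (HB j s s0 sT) _; exact: ler_norm.
Qed.

Lemma g_bound v T : 0 <= T -> exists C : R,
  forall s, 0 <= s -> s <= T -> forall i, gv v i s <= C.
Proof.
move=> T0; have [A [A0 HA]] := a_bound T0; have [B [B0 HB]] := f_bound v T0.
exists (\sum_(j < N) A * (B + B)) => s s0 sT i.
rewrite /gv; apply: ler_sum => j _.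
apply: le_trans (ler_wpM2l (aa_ge0 i j s0) (ler_norm _)) _.
apply: ler_pM; first exact: aa_ge0.
- by [].
- exact: HA.
apply: le_trans (ler_normB _ _) _.
by apply: lerD; apply: HB.
Qed.

Lemma small_le0 (y B : R) : 0 <= B -> (forall n : nat, y <= B / 2 ^+ n) -> y <= 0.
Proof.
move=> B0 H; rewrite leNgt; apply/negP => y0.
pose n := Num.truncn (B / y).
have h1 : B / y < n.+1%:R by exact: truncnS_gt.
have h2 : y * 2 ^+ n.+1 <= B.
  by have := H n.+1; rewrite ler_pdivlMr // exprn_gt0.
have h3 : n.+1%:R <= 2 ^+ n.+1 :> R.
  by rewrite -natrX ler_nat; apply: ltnW; exact: ltn_expl.
have h4 : B < y * n.+1%:R by rewrite -ltr_pdivrMl // mulrC.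
have : y * n.+1%:R <= y * 2 ^+ n.+1 by rewrite ler_pM2l.
lra.
Qed.


Lemma main_le v t0 m : 0 <= t0 -> (forall j, fv v j t0 <= m) ->
  forall s, t0 <= s -> forall i, fv v i s <= m.
Proof.
move=> t00 Hm s t0s.
have s0 : 0 <= s := le_trans t00 t0s.
have [A [A0 HA]] := a_bound s0.
have [B [B0 HB]] := f_bound v s0.
have [C HC] := g_bound v s0.
pose K := N%:R * A.
have K0 : 0 <= K by rewrite mulr_ge0 // ler0n.
pose del := (K + 1)^-1 / 2.
have K1 : 0 < K + 1 by lra.
have del0 : 0 < del by rewrite divr_gt0 // invr_gt0.
have Kdel : K * del <= 1 / 2.
  have h : del * (K + 1) = 1 / 2.
    by rewrite /del mulrAC mulVf ?mul1r // gt_eqF.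
  have h2 : K * del <= (K + 1) * del by rewrite ler_wpM2r // ?ltW //; lra.
  lra.
pose B1 := B + `|m|.
have HB1 : 0 <= B1 by rewrite addr_ge0.
have Lip : forall j r u, 0 <= r -> r <= u -> u <= s ->
    fv v j u - fv v j r <= C * (u - r).
  move=> j r u r0 ru us; apply: (IS_le (ISf v j) r0 ru) => w rw wu.
  by apply: HC; lra.
have step : forall r0, t0 <= r0 -> r0 <= s -> (forall j, fv v j r0 <= m) ->
    forall u, r0 <= u -> u <= r0 + del -> u <= s -> forall i, fv v i u <= m.
  move=> r0 t0r0 r0s Hr0.
  have key : forall n : nat, forall u, r0 <= u -> u <= r0 + del -> u <= s ->
      forall i, fv v i u - m <= B1 / 2 ^+ n.
    elim=> [|n IH] u r0u ud us i.
      rewrite expr0 divr1.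
      have h1 := HB u (le_trans t00 (le_trans t0r0 r0u)) us i.
      have h2 := ler_norm (fv v i u).
      have h3 := ler_norm (- m); rewrite normrN in h3.
      rewrite /B1; lra.
    have q0 : 0 <= B1 / 2 ^+ n by rewrite divr_ge0 // exprn_ge0.
    have e2 : B1 / 2 ^+ n.+1 = (B1 / 2 ^+ n) / 2.
      by rewrite -mulrA -invfM -exprSr.
    case: (leP (fv v i u) m) => fim.
      rewrite e2; have : 0 <= B1 / 2 ^+ n / 2 by rewrite divr_ge0.
      lra.
    pose S := [set rho | r0 <= rho /\ rho <= u /\ fv v i rho <= m].
    have S0 : S r0 by split; [exact: lexx | split; [exact: r0u | exact: Hr0]].
    have hS : has_sup S.
      split; first by exists r0.
      by exists u => rho [_ [? _]].
    have r0r : r0 <= sup S := sup_upper_bound hS S0.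
    have ru : sup S <= u.
      by apply: ge_sup; [exists r0 | move=> rho [_ [? _]]].
    have rnn : 0 <= sup S by lra.
    have fr : fv v i (sup S) <= m.
      apply/ler_addgt0Pr => e e0.
      pose C1 := `|C| + 1.
      have C10 : 0 < C1 by rewrite /C1; have := normr_ge0 C; lra.
      have eC : 0 < e / C1 by rewrite divr_gt0.
      have [rho Srho hrho] := sup_adherent eC hS.
      have rhor : rho <= sup S := sup_upper_bound hS Srho.
      case: Srho => r0rho [rhou frho].
      have L := Lip i rho (sup S) ltac:(lra) rhor ltac:(lra).
      have hC : C * (sup S - rho) <= C1 * (e / C1).
        apply: le_trans (_ : C1 * (sup S - rho) <= _).
          apply: ler_wpM2r; first lra.
          have := ler_norm C; rewrite /C1; lra.
        by apply: ler_wpM2l; [lra | lra].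
      have eq1 : C1 * (e / C1) = e by rewrite mulrC divfK // gt_eqF.
      lra.
    have after : forall rho, sup S < rho -> rho <= u -> m < fv v i rho.
      move=> rho rrho rhou; rewrite ltNge; apply/negP => fle.
      have Srho : S rho by split; [lra | split].
      have := sup_upper_bound hS Srho.
      lra.
    have Hle : fv v i u - fv v i (sup S) <= (K * (B1 / 2 ^+ n)) * (u - sup S).
      apply: (IS_le (ISf v i) rnn ru) => rho rrho rhou.
      rewrite /gv.
      apply: le_trans (_ : \sum_(j < N) A * (B1 / 2 ^+ n) <= _).
        apply: ler_sum => j _.
        have rho0 : 0 <= rho by lra.
        apply: le_trans (_ : aa i j rho * (B1 / 2 ^+ n) <= _).
          apply: ler_wpM2l; first exact: aa_ge0.
          have h1 := IH rho ltac:(lra) ltac:(lra) ltac:(lra) j.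
          have h2 := after rho rrho rhou.
          lra.
        by apply: ler_wpM2r => //; apply: HA => //; lra.
      by rewrite sumr_const card_ord /K -mulrA mulr_natl.
    have h4 : (K * (B1 / 2 ^+ n)) * (u - sup S) <= (K * (B1 / 2 ^+ n)) * del.
      by apply: ler_wpM2l; [rewrite mulr_ge0 | lra].
    have h5 : (K * (B1 / 2 ^+ n)) * del <= (1/2) * (B1 / 2 ^+ n).
      by rewrite mulrAC; apply: ler_wpM2r.
    rewrite e2; lra.
  move=> u r0u ud us i.
  have := small_le0 HB1 (fun n => key n u r0u ud us i).
  by rewrite subr_le0.
have iter : forall k : nat, forall u, t0 <= u -> u <= t0 + k%:R * del -> u <= s ->
    forall i, fv v i u <= m.
  elim=> [|k IH] u t0u uk us i.
    rewrite mul0r addr0 in uk.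
    have -> : u = t0 by apply/eqP; rewrite eq_le uk t0u.
    exact: Hm.
  case: (leP u (t0 + k%:R * del)) => uk'.
    exact: IH.
  have kd0 : 0 <= k%:R * del by rewrite mulr_ge0 // ?ler0n // ltW.
  apply: (step (t0 + k%:R * del)) => //.
  - by lra.
  - by lra.
  - by move=> j; apply: IH => //; lra.
  - by lra.
  - by move: uk; rewrite -addn1 natrD mulrDl mul1r addrA.
pose k := (Num.truncn ((s - t0) / del)).+1.
apply: (iter k) => //.
have := truncnS_gt ((s - t0) / del).
rewrite ltr_pdivrMr // => h.
rewrite /k; lra.
Qed.


Lemma fv_row v j t : fv v j t = dotv v (row j (x t)).
Proof. by rewrite /fv /dotv; apply: eq_bigr => k _; rewrite mxE. Qed.

Lemma main_ex v (j0 : 'I_N) t s i : 0 <= t -> t <= s ->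
  exists a, fv v i s <= fv v a t.
Proof.
move=> t0 ts.
have := main_le (v := v) (m := \big[Num.max/fv v j0 t]_j fv v j t) t0
  (fun j => bigmax_ge (fun j => fv v j t) _ j) ts i.
have [a ->] := bigmax_ex (fun j => fv v j t) j0.
by move=> h; exists a.
Qed.

Lemma part1 (j0 : 'I_N) t s : 0 <= t -> t <= s -> supp (x s) `<=` supp (x t).
Proof.
move=> t0 ts z Hz; apply: Hz; split; [|split].
- by apply: closed_bigI => C [].
- move=> a b Ha Hb l l0 l1 C HC; have [_ [vC _]] := HC.
  by apply: vC => //; [exact: Ha | exact: Hb].
- move=> _ [i _ <-] C [cC [vC sC]].
  case: (pselect (C (row i (x s)))) => // nC; exfalso.
  have CP : forall j, C (row j (x t)) by move=> j; apply: sC; exists j.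
  have [w Hw] := separate j0 cC vC CP nC.
  have [a Ha] := main_ex w j0 i t0 ts.
  move: (Hw a); rewrite -!fv_row => h.
  by move: (lt_le_trans h Ha); rewrite ltxx.
Qed.

Definition ek (k : 'I_d) := fun k' : 'I_d => if k' == k then 1 else 0 : R.

Lemma fv_ek k j t : fv (ek k) j t = x t j k.
Proof.
rewrite /fv (bigD1 k) //= /ek eqxx mul1r big1 ?addr0 // => k' /negbTE ->.
by rewrite mul0r.
Qed.

Lemma fv_N v j t : fv (fun k => - v k) j t = - fv v j t.
Proof. by rewrite /fv -sumrN; apply: eq_bigr => k _; rewrite mulNr. Qed.

Lemma part2 (j0 : 'I_N) k t s : 0 <= t -> t <= s ->
  fmax (fun j => x s j k) <= fmax (fun j => x t j k) /\
  fmin (fun j => x t j k) <= fmin (fun j => x s j k).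
Proof.
move=> t0 ts.
have Hmax : forall j, x s j k <= fmax (fun j => x t j k).
  move=> j; rewrite -fv_ek; apply: (main_le t0 _ ts j) => j'.
  by rewrite fv_ek /fmax; exact: (bigmax_ge (fun j => x t j k)).
have Hmin : forall j, fmin (fun j => x t j k) <= x s j k.
  move=> j; rewrite -lerN2 -fv_ek -fv_N.
  apply: (main_le t0 _ ts j) => j'.
  by rewrite fv_N fv_ek lerN2 /fmin; exact: (bigmin_le (fun j => x t j k)).
split.
- rewrite {1}/fmax; apply: bigmax_leB => //.
  by have [j1 ->] := head_ex (fun j => x s j k) j0.
- rewrite {2}/fmin; apply: bigmin_geB => //.
  by have [j1 ->] := head_ex (fun j => x s j k) j0.
Qed.

Lemma part3 (j0 : 'I_N) t s : 0 <= t -> t <= s -> diam (x s) <= diam (x t).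
Proof.
move=> t0 ts.
have D0 : 0 <= diam (x t).
  rewrite /diam; apply: le_trans (bigmax_ge _ _ j0).
  apply: le_trans (bigmax_ge _ _ j0); exact: sqrtr_ge0.
rewrite {1}/diam; apply: bigmax_leB => // i.
apply: bigmax_leB => // j.
pose w := fun k => x s j k - x s i k.
have [a Ha] := main_ex w j0 j t0 ts.
have [b Hb] := main_ex (fun k => - w k) j0 i t0 ts.
rewrite !fv_N lerN2 in Hb.
pose u := fun k => x t a k - x t b k.
have e1 : \sum_(k < d) w k ^+ 2 = fv w j s - fv w i s.
  by rewrite /fv -sumrB; apply: eq_bigr => k _; rewrite /w; ring.
have e2 : fv w a t - fv w b t = \sum_(k < d) w k * u k.
  by rewrite /fv -sumrB; apply: eq_bigr => k _; rewrite /u; ring.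
have h1 : \sum_(k < d) w k ^+ 2 <= \sum_(k < d) w k * u k by lra.
have h2 : 2 * \sum_(k < d) w k * u k <= \sum_(k < d) w k ^+ 2 + \sum_(k < d) u k ^+ 2.
  rewrite mulr_sumr -big_split /=; apply: ler_sum => k _.
  have := sqr_ge0 (w k - u k); nra.
have h3 : \sum_(k < d) w k ^+ 2 <= \sum_(k < d) u k ^+ 2 by lra.
apply: le_trans (_ : eucl_norm (row a (x t) - row b (x t)) <= _).
  rewrite /eucl_norm ler_sqrt; last by apply: sumr_ge0 => k _; exact: sqr_ge0.
  have -> : \sum_(k < d) (row j (x s) - row i (x s)) ord0 k ^+ 2 = \sum_(k < d) w k ^+ 2.
    by apply: eq_bigr => k _; rewrite !mxE.
  have -> : \sum_(k < d) (row a (x t) - row b (x t)) ord0 k ^+ 2 = \sum_(k < d) u k ^+ 2.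
    by apply: eq_bigr => k _; rewrite !mxE.
  exact: h3.
rewrite /diam; apply: le_trans (bigmax_ge _ _ b).
exact: (bigmax_ge (fun j0 => eucl_norm (row j0 (x t) - row b (x t))) _ a).
Qed.

End ODE.

Unset Implicit Arguments.
Set Strict Implicit.

Theorem proposition1 (R : realType) (N d : nat) (hN : (2 <= N)%N) (hd : (1 <= d)%N)
  (lam : 'I_N -> 'M[R]_(N, d) -> R)
  (phi : 'I_N -> 'I_N -> 'rV[R]_d * 'rV[R]_d -> R)
  (M : 'I_N -> 'I_N -> R -> R) (x : R -> 'M[R]_(N, d))
  (hM_meas : forall i j, measurable_fun (`[0%R, +oo[%classic : set (Leb R)) (M i j : Leb R -> R))
  (hM_range : forall i j t, 0 <= t -> 0 <= M i j t <= 1)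
  (hlam_lip : forall i, lipschitz (lam i))
  (hlam_pos : forall i X, 0 < lam i X)
  (hphi_lip : forall i j, lipschitz (phi i j))
  (hphi_pos : forall i j y z, 0 < phi i j (y, z))
  (hx : caratheodory_solution lam phi M x) :
  (forall t s : R, 0 <= t -> t <= s -> supp (x s) `<=` supp (x t)) /\
  (d = 1%N -> forall k : 'I_d, forall t s : R, 0 <= t -> t <= s ->
      fmax (fun j => x s j k) <= fmax (fun j => x t j k) /\
      fmin (fun j => x t j k) <= fmin (fun j => x s j k)) /\
  (forall t s : R, 0 <= t -> t <= s -> diam (x s) <= diam (x t)).
Proof.
have j0 : 'I_N := Ordinal (ltn_trans (isT : (0 < 1)%N) hN).
split; [|split].
- by move=> t s t0 ts; exact: (part1 hM_range hlam_lip hlam_pos hphi_lip hphi_pos hx j0 t0 ts).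
- by move=> _ k t s t0 ts; exact: (part2 hM_range hlam_lip hlam_pos hphi_lip hphi_pos hx j0 k t0 ts).
- by move=> t s t0 ts; exact: (part3 hM_range hlam_lip hlam_pos hphi_lip hphi_pos hx j0 t0 ts).
Qed.
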